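(* Let $a,x\in \mathcal{A}$, $\lambda,\mu\in \mathbb{C}^*$, $ax=\lambda xa$ and $a^*x=\mu xa^*$. If $a\in \mathcal{A}^{\mathrm{gcEP}}$, then $a^{\mathrm{gcEP}}x=\lambda^{-1}xa^{\mathrm{gcEP}}$.
   Context: $\mathcal{A}$ is a complex Banach *-algebra with identity, and $\mathbb{C}^*$ is the set of nonzero complex numbers. An element $a$ has a generalized core-EP inverse if there is $y\in\mathcal{A}$ with $y=ay^2$, $(ay)^*=ay$, $\lim_{n\to\infty}\|a^n-ya^{n+1}\|^{1/n}=0$; such $y$ is unique, denoted $a^{\mathrm{gcEP}}$, and $\mathcal{A}^{\mathrm{gcEP}}$ is the set of such $a$. *)

(* Defs.v *)
From HB Require Import structures.
From mathcomp Require Import all_boot all_order all_algebra.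
From mathcomp Require Import all_classical all_reals all_analysis.
From mathcomp Require Import complex.
Set Implicit Arguments. Unset Strict Implicit. Unset Printing Implicit Defensive.
Import Order.TTheory GRing.Theory Num.Theory.
Import numFieldNormedType.Exports.
Local Open Scope ring_scope.
Local Open Scope complex_scope.
Local Open Scope classical_set_scope.

(* A complex Banach *-algebra with identity: a (unital, associative)
   algebra A over C = R[i] (R : realType, so R[i] is the complex field),
   with the homogeneity N(c x) = abs(c) N(x) stated in R[i] via the embedding %:C,
   a complete submultiplicative algebra norm N : A -> R with N 1 = 1,
   and an involution star (conjugate-linear, anti-multiplicative, involutive). *)
Definition is_banach_star_algebra {R : realType} {A : algType R[i]}
    (N : A -> R) (star : A -> A) : Prop :=
  [/\
      [/\ (forall x : A, 0 <= N x),
      (forall x : A, N x = 0 -> x = 0),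
      (forall x y : A, N (x + y) <= N x + N y),
      (forall (c : R[i]) (x : A), (N (c *: x))%:C = `|c| * (N x)%:C) &
      (forall x y : A, N (x * y) <= N x * N y)],
      N 1 = 1,
      (forall u : nat -> A,
          (forall e : R, 0 < e -> exists M : nat, forall m n : nat,
              (M <= m)%N -> (M <= n)%N -> N (u m - u n) < e) ->
          exists l : A, forall e : R, 0 < e -> exists M : nat, forall n : nat,
              (M <= n)%N -> N (u n - l) < e) &
      [/\ (forall x y : A, star (x + y) = star x + star y),
          (forall (c : R[i]) (x : A), star (c *: x) = (c^*) *: star x),
          (forall x y : A, star (x * y) = star y * star x) &
          (forall x : A, star (star x) = x)]].

Definition is_gcEP_inverse {R : realType} {A : algType R[i]}
    (N : A -> R) (star : A -> A) (a y : A) : Prop :=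
  [/\ y = a * y ^+ 2,
      star (a * y) = a * y &
      (fun n : nat => powR (N (a ^+ n - y * a ^+ n.+1)) (n%:R^-1)) @ \oo --> (0 : R)].

Definition has_gcEP {R : realType} {A : algType R[i]}
    (N : A -> R) (star : A -> A) (a : A) : Prop :=
  exists y : A, is_gcEP_inverse N star a y.

(* Main.v *)
Require Import Defs.
From HB Require Import structures.
From mathcomp Require Import all_boot all_order all_algebra.
From mathcomp Require Import all_classical all_reals all_analysis.
From mathcomp Require Import complex.
From mathcomp Require Import ring.
Import Order.TTheory GRing.Theory Num.Theory.
Import numFieldNormedType.Exports.
Local Open Scope ring_scope.
Local Open Scope classical_set_scope.
Local Open Scope complex_scope.

Lemma limL (R : realType) (f : nat -> R) (nz K c : R) :
  0 <= K -> 0 <= c -> (forall n, 0 <= f n) ->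
  (fun n : nat => powR (f n) (n%:R^-1)) @ \oo --> (0 : R) ->
  (forall n, (0 < n)%N -> nz <= f n * K * c ^+ n) -> nz <= 0.
Proof.
move=> K0 c0 f0 hlim hb.
rewrite leNgt; apply/negP => nzp.
have e0 : 0 < (2 * (c + 1))^-1 by rewrite invr_gt0 mulr_gt0 // ltr_wpDl.
have [M _ HM] := cvgr_dist_lt _ _ hlim _ e0.
pose n := maxn (maxn M 1) (Num.bound (K / nz)).
have Mn : (M <= n)%N by rewrite /n !leq_max leqnn.
have n1 : (0 < n)%N by rewrite /n !leq_max orbT.
have hn := HM n Mn; rewrite /= sub0r normrN ger0_norm ?powR_ge0 // in hn.
have fn : f n <= ((2 * (c + 1))^-1) ^+ n.
  have -> : f n = (powR (f n) n%:R^-1) ^+ n.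
    rewrite -powR_mulrn ?powR_ge0 // -powRrM mulVf ?powRr1 //.
    by rewrite pnatr_eq0 -lt0n.
  apply: lerXn2r; rewrite ?nnegrE ?powR_ge0 ?invr_ge0 ?ltW //.
  by rewrite mulr_gt0 ?ltr_wpDl.
have c2 : (2 * (c + 1))^-1 * c <= 2^-1.
  rewrite invfM mulrAC ler_pdivrMr ?ltr_wpDl // mulrDr mulr1.
  by rewrite lerDl invr_ge0.
have : nz <= K * (2 ^+ n)^-1.
  apply: (le_trans (hb n n1)).
  rewrite mulrAC [leLHS]mulrC ler_wpM2l //.
  apply: (le_trans (ler_wpM2r (exprn_ge0 n c0) fn)).
  rewrite -exprMn -exprVn; apply: lerXn2r => //; rewrite ?nnegrE ?invr_ge0 //.
  by rewrite mulr_ge0 // invr_ge0 mulr_ge0 // addr_ge0.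
move=> H.
have H2 : 2 ^+ n <= K / nz :> R.
  by rewrite ler_pdivlMr // mulrC -ler_pdivlMr ?exprn_gt0.
have := archi_boundP (divr_ge0 K0 (ltW nzp)).
rewrite ltNge => /negP; apply.
apply: (le_trans _ H2).
apply: (@le_trans _ _ (n%:R)); first by rewrite ler_nat /n leq_max leqnn orbT.
by rewrite -natrX ler_nat ltnW // ltn_expl.
Qed.

Section Alg.
Variables (R : realType) (A : algType R[i]) (N : A -> R).
Hypotheses (N0 : forall x : A, 0 <= N x) (Ndef : forall x : A, N x = 0 -> x = 0)
  (NZ : forall (c : R[i]) (x : A), (N (c *: x))%:C = `|c| * (N x)%:C)
  (NM : forall x y : A, N (x * y) <= N x * N y) (N1 : N 1 = 1).

Definition rc (c : R[i]) : R := complex.Re `|c|.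
Lemma rcE c : `|c| = (rc c)%:C.
Proof. by rewrite /rc normc_def. Qed.
Lemma rc_ge0 c : 0 <= rc c.
Proof. by rewrite -ler0c -rcE. Qed.
Lemma rc_gt0 c : c != 0 -> 0 < rc c.
Proof. by move=> c0; rewrite -ltcR -rcE normr_gt0. Qed.
Lemma rcX c n : rc (c ^+ n) = rc c ^+ n.
Proof.
have : (rc (c ^+ n))%:C = (rc c ^+ n)%:C by rewrite -rcE normrX rcE rmorphXn.
by move/(congr1 (@complex.Re _)).
Qed.
Lemma NZr c x : N (c *: x) = rc c * N x.
Proof.
have : (N (c *: x))%:C = (rc c * N x)%:C by rewrite NZ rcE rmorphM.
by move/(congr1 (@complex.Re _)).
Qed.

Lemma Npow y n : N (y ^+ n) <= N y ^+ n.
Proof.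
elim: n => [|n IH]; first by rewrite !expr0 N1.
rewrite !exprS; apply: (le_trans (NM _ _)); exact: ler_wpM2l.
Qed.

Variables (a y : A).
Hypothesis Hy : y = a * y ^+ 2.
Hypothesis Hlim : (fun n : nat => powR (N (a ^+ n - y * a ^+ n.+1)) (n%:R^-1)) @ \oo --> (0 : R).

Let d n := a ^+ n - y * a ^+ n.+1.

Lemma zeroL z K c : 0 <= K -> 0 <= c ->
  (forall n, (0 < n)%N -> N z <= N (d n) * K * c ^+ n) -> z = 0.
Proof.
move=> K0 c0 hb; apply: Ndef; apply/eqP; rewrite eq_le N0 andbT.
exact: (@limL R (fun n => N (d n)) _ _ _ K0 c0 (fun n => N0 _) Hlim hb).
Qed.

Lemma ay2 k : a * y ^+ k.+2 = y ^+ k.+1.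
Proof. by rewrite !exprS !mulrA -[a * y * y]mulrA -expr2 -Hy. Qed.

Lemma yn n : y = a ^+ n * y ^+ n.+1.
Proof.
elim: n => [|n IH]; first by rewrite expr0 mul1r expr1.
by rewrite exprSr -mulrA ay2.
Qed.

Lemma ayn n : (0 < n)%N -> a * y = a ^+ n * y ^+ n.
Proof. by case: n => // n _; rewrite {1}(yn n) mulrA -exprS. Qed.

Lemma yay : y * a * y = y.
Proof.
apply/eqP; rewrite eq_sym -subr_eq0; apply/eqP.
apply: (@zeroL _ (N y) (N y) (N0 _) (N0 _)) => n _.
have -> : y - y * a * y = d n * y ^+ n.+1.
  by rewrite /d mulrBl -yn exprS !mulrA -[y * a * a ^+ n * _]mulrA -yn.
apply: (le_trans (NM _ _)); rewrite -mulrA ler_wpM2l //.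
by apply: (le_trans (Npow _ _)); rewrite exprS.
Qed.

Lemma yap : y * a * (a * y) = a * y.
Proof.
apply/eqP; rewrite eq_sym -subr_eq0; apply/eqP.
apply: (@zeroL _ 1 (N y) ler01 (N0 _)) => n n0.
have -> : a * y - y * a * (a * y) = d n * y ^+ n.
  by rewrite /d mulrBl -ayn // exprS !mulrA -[y * a * a ^+ n * _]mulrA -ayn // !mulrA.
apply: (le_trans (NM _ _)); rewrite mulr1 ler_wpM2l //.
exact: Npow.
Qed.

Lemma py0 : (1 - a * y) * y = 0.
Proof. by rewrite mulrBl mul1r -mulrA -expr2 -Hy subrr. Qed.

Lemma F3 (x : A) (m l : R[i]) : l != 0 -> m *: (a * x) = l *: (x * a) ->
  (1 - a * y) * x * (a * y) = 0.
Proof.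
move=> l0 hx.
have hp : forall n, m ^+ n *: (a ^+ n * x) = l ^+ n *: (x * a ^+ n).
  elim=> [|n IH]; first by rewrite !expr0 !scale1r mul1r mulr1.
  rewrite [m ^+ n.+1]exprS -scalerA [a ^+ n.+1]exprS -mulrA scalerAr IH -scalerAr.
  rewrite scalerA mulrC -scalerA [a * (x * _)]mulrA scalerAl hx -scalerAl scalerA.
  by rewrite -mulrA -exprS -exprSr.
set p := a * y.
have key : forall n, (0 < n)%N ->
    m ^+ n *: ((1 - p) * d n * x * y ^+ n) = l ^+ n *: ((1 - p) * x * p).
  move=> n n0.
  rewrite /d mulrBr [(1 - p) * (y * _)]mulrA py0 mul0r subr0.
  rewrite -[(1 - p) * a ^+ n * x]mulrA scalerAl scalerAr hp -scalerAr -scalerAl.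
  by rewrite -!mulrA /p (ayn n n0).
apply: (@zeroL _ (N (1 - p) * N x) (rc m * N y / rc l)).
- by apply: mulr_ge0.
- by rewrite divr_ge0 ?mulr_ge0 ?rc_ge0.
move=> n n0.
have b1 : N ((1 - p) * d n * x * y ^+ n) <= N (1 - p) * N (d n) * N x * N y ^+ n.
  apply: (le_trans (NM _ _)); apply: ler_pM; [exact: N0|exact: N0| |exact: Npow].
  apply: (le_trans (NM _ _)); apply: ler_pM; [exact: N0|exact: N0| |done].
  exact: NM.
have b2 := key n n0.
move/(congr1 N): b2; rewrite !NZr !rcX => b2.
have rl0 := rc_gt0 l l0.
rewrite expr_div_n.
have -> : forall u v w : R, u * (v / w) = (u * v) / w by move=> u v w; rewrite mulrA.
rewrite ler_pdivlMr ?exprn_gt0 // [leLHS]mulrC -b2.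
apply: (le_trans (ler_wpM2l (exprn_ge0 _ (rc_ge0 m)) b1)).
by rewrite exprMn le_eqVlt; apply/orP; left; apply/eqP; ring.
Qed.
End Alg.

Theorem lemma3p2 (R : realType) (A : algType R[i]) (N : A -> R) (star : A -> A)
    (a x : A) (lam mu : R[i]) :
  is_banach_star_algebra N star ->
  lam != 0 -> mu != 0 ->
  a * x = lam *: (x * a) ->
  star a * x = mu *: (x * star a) ->
  has_gcEP N star a ->
  forall y : A, is_gcEP_inverse N star a y ->
  y * x = lam^-1 *: (x * y).
Proof.
case=> [[N0 Ndef _ NZ NM] N1 _ [sD sZ sM sK]] lam0 mu0 hax hsx _ y [Hy Hs Hlim].
have F1 := @yay _ _ _ N0 Ndef NM N1 _ _ Hy Hlim.
have F2 := @yap _ _ _ N0 Ndef NM N1 _ _ Hy Hlim.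
have P1 := @F3 _ _ _ N0 Ndef NZ NM N1 _ _ Hy Hlim x 1 lam lam0 ltac:(by rewrite scale1r).
have s0 : star 0 = 0.
  by have h := sD 0 0; rewrite addr0 in h; apply: (addrI (star 0)); rewrite addr0 -h.
have sN : forall v, star (- v) = - star v.
  by move=> v; have := sZ (-1) v; rewrite scaleN1r => ->; rewrite rmorphN1 scaleN1r.
have s1 : star 1 = 1.
  by have h := sM (star 1) 1; rewrite mulr1 sK mulr1 in h.
have hxs : mu^* *: (a * star x) = 1 *: (star x * a).
  by rewrite scale1r; have := congr1 star hsx; rewrite sM sK sZ sM sK => ->.
have P2 := @F3 _ _ _ N0 Ndef NZ NM N1 _ _ Hy Hlim (star x) (conjc mu) 1 (oner_neq0 _) hxs.
have e : star ((1 - a * y) * star x * (a * y)) = (a * y) * (x * (1 - a * y)).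
  by rewrite sM Hs sM sK sD s1 sN Hs.
move: P2 => /(congr1 star); rewrite e s0 => P2.
have e1 : x * (a * y) = a * y * x * (a * y).
  by move: P1; rewrite !mulrBl mul1r => /eqP; rewrite subr_eq0 => /eqP.
have e2 : a * y * x = a * y * x * (a * y).
  by move: P2; rewrite !mulrBr mulr1 !mulrA => /eqP; rewrite subr_eq0 => /eqP.
have px : a * y * x = x * (a * y) by rewrite e1 -e2.
have yp : y * (a * y) = y by rewrite mulrA.
have py : a * y * y = y by rewrite -mulrA -expr2 -Hy.
have xa : x * a = lam^-1 *: (a * x) by rewrite hax scalerA mulVf // scale1r.
have h1 : y * a * x * y = x * y.
  have xy : x * y = a * y * (x * y) by rewrite [RHS]mulrA px -mulrA py.
  by rewrite -[y * a * x * y]mulrA xy !mulrA -[y * a * a * y]mulrA F2.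
by rewrite -{1}yp -mulrA px [x * (a * y)]mulrA mulrA xa -scalerAr -scalerAl !mulrA h1.
Qed.
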